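(* Let $G=(V,E)$ be a graph whose vertex set is partitioned into three (possibly empty) cliques $Q_1,Q_2,Q_3$ such that: (a) for all $i\neq j$, each vertex of $Q_i$ is adjacent to at most one vertex of $Q_j$; (b) for distinct $i,j,k$, if a vertex of $Q_i$ is adjacent to $b\in Q_j$ and to $c\in Q_k$, then $bc\in E$; (c) for each $i\in\{1,2,3\}$ there is a finite set of colours $L_i$ such that (i) every vertex $v\in Q_i$ has list $L(v)=L_i$, (ii) $|L_i|\ge |Q_i|$, (iii) there are colours $d_1\in L_1$, $d_2\in L_2$, $d_3\in L_3$ that are pairwise distinct, and (iv) no colour belongs to all three of $L_1,L_2,L_3$. Then $G$ admits an $L$-colouring, i.e., a proper vertex colouring in which every vertex $v$ receives a colour from $L(v)$. *)

(* Defs.v *)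
From mathcomp Require Import all_boot.
Set Implicit Arguments. Unset Strict Implicit. Unset Printing Implicit Defensive.

Definition simple_graph (T : finType) (e : rel T) : Prop :=
  symmetric e /\ irreflexive e.

Definition part_set (T : finType) (part : T -> 'I_3) (i : 'I_3) : {set T} :=
  [set v | part v == i].

Definition is_clique (T : finType) (e : rel T) (A : {set T}) : Prop :=
  forall u v, u \in A -> v \in A -> u != v -> e u v.

Definition L_colouring (T : finType) (C : Type) (e : rel T)
    (L : T -> C -> bool) (f : T -> C) : Prop :=
  (forall v, L v (f v)) /\ (forall u v, e u v -> f u <> f v).

(* Main.v *)
Require Import Defs.
From mathcomp Require Import all_boot.
From Stdlib Require Import FunctionalExtensionality.
Set Implicit Arguments. Unset Strict Implicit. Unset Printing Implicit Defensive.

Definition orients : seq (seq bool) :=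
  [:: [:: true; true; true]; [:: true; true; false]; [:: true; false; true];
      [:: true; false; false]; [:: false; true; true]; [:: false; true; false];
      [:: false; false; true]; [:: false; false; false]].

Definition chkE (E : nat -> nat -> bool) (I0 I1 I2 J0 J1 J2 P0 P1 P2 : bool) : bool :=
  let bI := nth false [:: I0; I1; I2] in
  let bJ := nth false [:: J0; J1; J2] in
  let bP := nth false [:: P0; P1; P2] in
  let bK i := bI i && bP i in
  let idx := iota 0 3 in
  let hyp := [&& all (fun i => (bI i ==> bJ i) && (bP i ==> bJ i)) idx,
     all (fun i => all (fun j => (bJ i && bJ j && (i != j)) ==> ~~ E i j) idx) idx,
     all (fun k => bK k ==> ~~ E (3+k) k) idx &
     ~~ has (fun a => all (fun i => (bJ i && E a i) || (bK i && E a (3+i))) idx) (iota 0 6)] in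
  let conc (t : seq bool) :=
     let ci i := if bK i && nth false t i then 3+i else i in
     let di i := if bK i && ~~ nth false t i then 3+i else i in
     all (fun i => all (fun j => (bI i && bI j && (i != j)) ==> ~~ E (ci i) (ci j)) idx) idx &&
     all (fun i => all (fun j => (bP i && bP j && (i != j)) ==> ~~ E (di i) (di j)) idx) idx in
  hyp ==> has conc orients.

Definition Epat (s : seq nat) := fun a b => nth 0 s (minn a 5) == nth 0 s (minn b 5).

Definition cand (ps : seq nat) (a : nat) := a :: [seq b <- iota 0 a | nth 0 ps b == b].

Definition stI (st : nat) := (st == 2) || (st == 4).
Definition stJ (st : nat) := st != 0.
Definition stP (st : nat) := (st == 3) || (st == 4).

Definition bigcheck : bool :=
  all (fun p1 => all (fun p2 => all (fun p3 => all (fun p4 => all (fun p5 =>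
   let E := Epat [:: 0; p1; p2; p3; p4; p5] in
   all (fun s0 => all (fun s1 => all (fun s2 =>
     chkE E (stI s0) (stI s1) (stI s2) (stJ s0) (stJ s1) (stJ s2) (stP s0) (stP s1) (stP s2))
     (iota 0 5)) (iota 0 5)) (iota 0 5))
  (cand [:: 0; p1; p2; p3; p4] 5)) (cand [:: 0; p1; p2; p3] 4)) (cand [:: 0; p1; p2] 3))
  (cand [:: 0; p1] 2)) (cand [:: 0] 1).

Lemma bigcheckP : bigcheck = true.
Proof. Time vm_compute. reflexivity. Qed.

Lemma chk_w (T : eqType) (w : nat -> T) (I0 I1 I2 J0 J1 J2 P0 P1 P2 : bool) :
  I0 ==> J0 -> P0 ==> J0 -> I1 ==> J1 -> P1 ==> J1 -> I2 ==> J2 -> P2 ==> J2 ->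
  chkE (fun a b => w (minn a 5) == w (minn b 5)) I0 I1 I2 J0 J1 J2 P0 P1 P2.
Proof.
move=> h1 h2 h3 h4 h5 h6.
pose pf x := find (fun y => w y == w x) (iota 0 6).
have hasx x : x < 6 -> has (fun y => w y == w x) (iota 0 6).
  by move=> lx; apply/hasP; exists x; rewrite ?mem_iota //.
have pf_lt x : x < 6 -> pf x < 6.
  by move=> lx; have := hasx x lx; rewrite has_find size_iota.
have wpf x : x < 6 -> w (pf x) = w x.
  move=> lx; apply/eqP; have := nth_find 0 (hasx x lx).
  by rewrite nth_iota ?add0n // -(size_iota 0 6) -has_find hasx.
have pf_le x : x < 6 -> pf x <= x.
  move=> lx; rewrite leqNgt; apply/negP => /(before_find 0).
  by rewrite nth_iota ?add0n // eqxx.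
have key x y : x < 6 -> y < 6 -> (w x == w y) = (pf x == pf y).
  move=> lx ly; apply/eqP/eqP => [Exy|Pxy]; first by rewrite /pf Exy.
  by rewrite -(wpf x lx) -(wpf y ly) Pxy.
have pfpf x : x < 6 -> pf (pf x) = pf x.
  by move=> lx; rewrite /pf (wpf x lx).
have pf0 : pf 0 = 0 by rewrite /pf /= eqxx.
have pfc x : x < 6 -> pf x \in cand (map pf (iota 0 x)) x.
  move=> lx; rewrite inE; case: eqP => //= ne.
  have lt : pf x < x by rewrite ltn_neqAle; apply/andP; split; [apply/eqP|apply: pf_le].
  rewrite mem_filter mem_iota /= lt andbT (nth_map 0) ?size_iota // nth_iota //.
  by rewrite add0n pfpf.
have Ef : (fun a b => w (minn a 5) == w (minn b 5)) =
          Epat (map pf (iota 0 6)).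
  apply: functional_extensionality => a; apply: functional_extensionality => b.
  have ma : minn a 5 < 6 by rewrite ltnS geq_minr.
  have mb : minn b 5 < 6 by rewrite ltnS geq_minr.
  rewrite /Epat key //.
  by rewrite !(nth_map 0) ?size_iota // !nth_iota.
rewrite Ef.
have -> : map pf (iota 0 6) = [:: 0; pf 1; pf 2; pf 3; pf 4; pf 5] by rewrite /= pf0.
have := bigcheckP; rewrite /bigcheck.
have c1 := pfc 1 isT; have c2 := pfc 2 isT; have c3 := pfc 3 isT;
have c4 := pfc 4 isT; have c5 := pfc 5 isT.
rewrite /= pf0 in c1 c2 c3 c4 c5.
move/allP/(_ _ c1)/allP/(_ _ c2)/allP/(_ _ c3)/allP/(_ _ c4)/allP/(_ _ c5).
have st (a b c : bool) : a ==> c -> b ==> c -> exists2 s, s \in iota 0 5 & [/\ stI s = a, stJ s = c & stP s = b].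
  case: a; case: b; case: c => //= _ _.
  - by exists 4.
  - by exists 2.
  - by exists 3.
  - by exists 1.
  - by exists 0.
have [s0 i0 [<- <- <-]] := st _ _ _ h1 h2.
have [s1 i1 [<- <- <-]] := st _ _ _ h3 h4.
have [s2 i2 [<- <- <-]] := st _ _ _ h5 h6.
by move/allP/(_ _ i0)/allP/(_ _ i1)/allP/(_ _ i2).
Qed.

Lemma nth3 (f : nat -> bool) i : i < 3 -> nth false [:: f 0; f 1; f 2] i = f i.
Proof. by case: i => [|[|[|]]]. Qed.

Lemma implyE' (a b : bool) (P : Prop) : (a ==> b) -> a -> (b -> P) -> P.
Proof. by move=> /implyP H /H hb; apply. Qed.

Lemma list_step (C : finType) (L : 'I_3 -> {set C}) (I J J' : {set 'I_3}) (d : 'I_3 -> C) :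
  (forall x, ~ (forall i, x \in L i)) -> I \subset J -> J' \subset J ->
  (forall i, i \in J -> d i \in L i) -> {in J &, injective d} ->
  (forall k, k \in I -> k \in J' -> 1 < #|L k|) ->
  exists c d' : 'I_3 -> C,
    [/\ forall i, i \in I -> c i \in L i, {in I &, injective c},
        forall i, i \in J' -> d' i \in L i /\ (i \in I -> d' i != c i)
      & {in J' &, injective d'}].
Proof.
move=> notr sIJ sJ'J dL dinj big.
pose e k := odflt (d k) [pick x in L k :\ d k].
have he k : k \in I -> k \in J' -> e k \in L k /\ e k != d k.
  move=> kI kJ'; rewrite /e; case: pickP => [x|]; first by rewrite !inE => /andP[-> ->].
  move=> none; have := big k kI kJ'.
  rewrite (cardsD1 (d k) (L k)) dL ?(subsetP sIJ) // add1n ltnS card_gt0.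
  by case/set0Pn => x; rewrite none.
pose w (a : nat) := if a < 3 then d (inord a) else e (inord (a - 3)).
pose bI i := (inord i : 'I_3) \in I.
pose bJ i := (inord i : 'I_3) \in J.
pose bP i := (inord i : 'I_3) \in J'.
have sub k : (bI k ==> bJ k) && (bP k ==> bJ k).
  by apply/andP; split; apply/implyP => H; [apply: (subsetP sIJ) | apply: (subsetP sJ'J)].
have := @chk_w _ w (bI 0) (bI 1) (bI 2) (bJ 0) (bJ 1) (bJ 2) (bP 0) (bP 1) (bP 2).
case/andP: (sub 0) => -> ->; case/andP: (sub 1) => -> ->; case/andP: (sub 2) => -> ->.
move=> /(_ isT isT isT isT isT isT); rewrite /chkE.
have wd i : i < 3 -> w (minn i 5) = d (inord i).
  move=> li; have -> : minn i 5 = i by apply/minn_idPl; apply: leq_trans (ltnW li) _.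
  by rewrite /w li.
have we i : i < 3 -> w (minn (3 + i) 5) = e (inord i).
  move=> li; have -> : minn (3 + i) 5 = 3 + i.
    by apply/minn_idPl; rewrite -(addn2 3) leq_add2l -ltnS.
  by rewrite /w ltnNge leq_addr /= addKn.
have inordK' (k : 'I_3) : (inord (val k) : 'I_3) = k by apply: inord_val.
move=> H; apply: (implyE' H).
- apply/and4P; split.
  + by apply/allP => i; rewrite mem_iota => /andP[_ li]; rewrite !nth3 // sub.
  + apply/allP => i; rewrite mem_iota => /andP[_ li]; apply/allP => j.
    rewrite mem_iota => /andP[_ lj]; rewrite !nth3 // wd // wd //.
    apply/implyP => /andP[/andP[Ji Jj] nij]; apply/negP => /eqP /dinj.
    move=> /(_ Ji Jj) /(congr1 (@nat_of_ord 3)); rewrite !inordK //.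
    by move/eqP; rewrite (negbTE nij).
  + apply/allP => k; rewrite mem_iota => /andP[_ lk]; rewrite !nth3 // we // wd //.
    by apply/implyP => /andP[kI kJ']; case: (he _ kI kJ').
  + apply/hasP => [[a _ /allP Ha]]; apply: (notr (w (minn a 5))) => k.
    have := Ha k; rewrite mem_iota ltn_ord => /(_ isT).
    set x := w (minn a 5).
    rewrite !nth3 ?ltn_ord // we ?ltn_ord // wd ?ltn_ord // /bJ /bI /bP !inord_val.
    case/orP => [/andP[kJ /eqP ->]|/andP[/andP[kI kJ'] /eqP ->]]; first exact: dL.
    by case: (he _ kI kJ').
move=> /hasP [t _ /andP[/allP Hc /allP Hd]].
pose s (k : 'I_3) := nth false t k.
pose c k := if (k \in I) && (k \in J') && s k then e k else d k.
pose d' k := if (k \in I) && (k \in J') && ~~ s k then e k else d k.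
have wc (k : 'I_3) : w (minn (if bI k && bP k && nth false t k then 3 + k else k) 5) = c k.
  rewrite /c /s /bI /bP !inord_val.
  by case: ifP => _; rewrite ?we ?wd ?inord_val ?ltn_ord.
have wd' (k : 'I_3) : w (minn (if bI k && bP k && ~~ nth false t k then 3 + k else k) 5) = d' k.
  rewrite /d' /s /bI /bP !inord_val.
  by case: ifP => _; rewrite ?we ?wd ?inord_val ?ltn_ord.
exists c, d'; split.
- move=> i iI; rewrite /c; case: ifP => [/andP[/andP[_ iJ'] _]|_].
    by case: (he _ iI iJ').
  by apply: dL; apply: (subsetP sIJ).
- move=> i j iI jI cij; apply/eqP; apply/negPn/negP => nij.
  have := Hc (nat_of_ord i); rewrite mem_iota ltn_ord => /(_ isT) /allP /(_ (nat_of_ord j)).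
  rewrite mem_iota ltn_ord => /(_ isT); rewrite !nth3 ?ltn_ord //.
  rewrite wc wc /bI !inord_val iI jI /= cij eqxx implybF.
  by rewrite nij.
- move=> i iJ'; split.
    rewrite /d'; case: ifP => [/andP[/andP[iI _] _]|_].
      by case: (he _ iI iJ').
    by apply: dL; apply: (subsetP sJ'J).
  move=> iI; rewrite /d' /c iI iJ' /=; case: (s i) => /=.
    by case: (he _ iI iJ') => _; rewrite eq_sym.
  by case: (he _ iI iJ').
- move=> i j iI jI cij; apply/eqP; apply/negPn/negP => nij.
  have := Hd (nat_of_ord i); rewrite mem_iota ltn_ord => /(_ isT) /allP /(_ (nat_of_ord j)).
  rewrite mem_iota ltn_ord => /(_ isT); rewrite !nth3 ?ltn_ord //.
  rewrite wd' wd' /bP !inord_val iI jI /= cij eqxx implybF.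
  by rewrite nij.
Qed.

Definition blk (T : finType) (e : rel T) (part : T -> 'I_3) (S : {set T}) (v : T) :=
  [set w in S | (w == v) || (e v w && (part w != part v))].

Definition HA (T : finType) (e : rel T) (part : T -> 'I_3) :=
  forall i j : 'I_3, i != j -> forall v, part v == i ->
     #|[set w | (part w == j) && e v w]| <= 1.

Definition HB (T : finType) (e : rel T) (part : T -> 'I_3) :=
  forall (a b c : T), part a != part b -> part b != part c -> part a != part c ->
     e a b -> e a c -> e b c.

Lemma le1_eq (T : finType) (A : {set T}) x y : #|A| <= 1 -> x \in A -> y \in A -> x = y.
Proof. by move/card_le1_eqP => H xA yA; rewrite (H _ _ yA xA). Qed.

Lemma F1 (T : finType) (e : rel T) (part : T -> 'I_3) S v u w :
  HA e part -> u \in blk e part S v -> w \in blk e part S v -> part u = part w -> u = w.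
Proof.
move=> ha; rewrite !inE => /andP[_ /orP[/eqP->|/andP[evu pu]]] /andP[_ /orP[/eqP->|/andP[evw pw]]] //.
- by move=> E; move: pw; rewrite E eqxx.
- by move=> E; move: pu; rewrite E eqxx.
move=> E; have := ha (part v) (part u); rewrite eq_sym pu => /(_ isT v (eqxx _)).
by move/le1_eq; apply; rewrite inE ?E eqxx.
Qed.

Lemma F3 (T : finType) (e : rel T) (part : T -> 'I_3) S v u z :
  symmetric e -> HA e part -> HB e part ->
  u \in blk e part S v -> z \in S -> z \notin blk e part S v -> e u z -> part z = part u.
Proof.
move=> es ha hb uB zS zB euz; apply/eqP/negPn/negP => pzu; move/negP: zB; apply.
move: uB; rewrite !inE zS /= => /andP[uS /orP[/eqP uv|/andP[evu puv]]].
  by subst u; rewrite euz pzu orbT.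
have [pzv|pzv] := eqVneq (part z) (part v).
  have := ha (part u) (part v) puv u (eqxx _) => /(@le1_eq _ _ z v).
  rewrite !inE pzv eqxx euz es evu => /(_ isT isT) zv.
  by rewrite zv eqxx.
have evz := hb u v z; rewrite es evu euz in evz.
by rewrite evz ?pzv ?orbT // eq_sym.
Qed.

Lemma graph_ind (T : finType) (e : rel T) (part : T -> 'I_3) (C : finType) (c0 : C) :
  symmetric e -> irreflexive e -> HA e part -> HB e part ->
  forall n (S : {set T}) (L : 'I_3 -> {set C}) (d : 'I_3 -> C),
  #|S| <= n -> (forall i, #|[set v in S | part v == i]| <= #|L i|) ->
  (forall x, ~ (forall i, x \in L i)) ->
  (forall i, i \in part @: S -> d i \in L i) -> {in part @: S &, injective d} ->
  exists f : T -> C, (forall v, v \in S -> f v \in L (part v)) /\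
    (forall u v, u \in S -> v \in S -> e u v -> f u != f v).
Proof.
move=> es eirr ha hb; elim=> [|n IH] S L d.
  rewrite leqn0 cards_eq0 => /eqP -> *.
  by exists (fun _ => c0); split => ?; rewrite inE.
move=> cS sz notr dL dinj.
case: (set_0Vmem S) => [->|[v vS]].
  by exists (fun _ => c0); split => ?; rewrite inE.
set B := blk e part S v.
set S' := S :\: B.
have BS : B \subset S by apply/subsetP => w; rewrite inE => /andP[].
have S'S : S' \subset S by apply: subsetDl.
have vB : v \in B by rewrite inE vS eqxx.
have [c [d' [cL cinj d'L d'inj]]] :
  exists c d' : 'I_3 -> C,
    [/\ forall i, i \in part @: B -> c i \in L i, {in part @: B &, injective c},
        forall i, i \in part @: S' -> d' i \in L i /\ (i \in part @: B -> d' i != c i)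
      & {in part @: S' &, injective d'}].
  apply: (@list_step C L (part @: B) (part @: S) (part @: S') d) => //; [exact: imsetS | exact: imsetS|].
  move=> k /imsetP[b bB ->] /imsetP[z zS' pz].
  apply: leq_trans (sz (part b)).
  have bz : b != z by apply: contraTneq zS' => <-; rewrite inE bB.
  apply: (@leq_trans #|[set b; z]|); first by rewrite cards2 bz.
  apply: subset_leq_card; apply/subsetP => x.
  rewrite !inE => /orP[] /eqP ->; rewrite ?pz eqxx andbT.
    exact: (subsetP BS).
  by move: zS'; rewrite inE => /andP[].
pose L' i := if i \in part @: B then L i :\ c i else L i.
have [f' [f'L f'p]] : exists f' : T -> C, (forall v, v \in S' -> f' v \in L' (part v)) /\
    (forall u v, u \in S' -> v \in S' -> e u v -> f' u != f' v).
  apply: (IH S' L' d').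
  - rewrite -ltnS; apply: leq_trans cS; apply: proper_card; apply/properP; split => //.
    by exists v => //; rewrite inE vB.
  - move=> i; rewrite /L'; case: ifP => [/imsetP[b bB ->]|_]; last first.
      apply: leq_trans (sz i); apply: subset_leq_card; apply/subsetP => x.
      by rewrite !inE => /andP[/andP[_ ->] ->].
    have := sz (part b); rewrite (cardsD1 (c (part b))) cL ?imset_f //.
    rewrite (cardsD1 b [set v in S | part v == part b]) !inE (subsetP BS) // eqxx /= !add1n ltnS.
    apply: leq_trans; apply: subset_leq_card; apply/subsetP => x.
    rewrite !inE => /andP[/andP[xB xS] ->]; rewrite xS andbT.
    by rewrite andbT; apply/eqP => xb; subst x; move/negP: xB; apply; move: bB; rewrite inE.
  - by move=> x Hx; apply: (notr x) => i; have := Hx i; rewrite /L'; case: ifP => // _; rewrite inE => /andP[].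
  - move=> i iS'; have [H1 H2] := d'L i iS'; rewrite /L'; case: ifP => // iB.
    by rewrite in_setD1 H1 (H2 iB).
  - exact: d'inj.
exists (fun w => if w \in B then c (part w) else f' w); split.
  move=> w wS; case: ifP => wB; first by apply: cL; apply: imset_f.
  have wS' : w \in S' by rewrite inE wB.
  by have := f'L w wS'; rewrite /L'; case: ifP => // _; rewrite in_setD1 => /andP[].
have key u w : u \in S -> w \in S -> e u w -> u \in B -> w \notin B -> c (part u) != f' w.
  move=> uS wS euw uB wB.
  have pw := F3 es ha hb uB wS wB euw.
  have wS' : w \in S' by rewrite inE wB.
  have := f'L w wS'; rewrite /L' pw imset_f // in_setD1 => /andP[H _].
  by rewrite eq_sym.
move=> u w uS wS euw; case: ifP => uB; case: ifP => wB.
- apply/negP => /eqP /cinj; rewrite !imset_f // => /(_ isT isT) puw.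
  have uw := F1 ha uB wB puw; subst w.
  by rewrite eirr in euw.
- by apply: key => //; rewrite wB.
- by rewrite eq_sym; apply: key => //; [rewrite es | rewrite uB].
- by apply: f'p; rewrite // /S' inE ?uB ?wB.
Qed.

Unset Implicit Arguments.

Theorem mainTheorem3 (T : finType) (e : rel T) (part : T -> 'I_3)
    (C : finType) (Ls : 'I_3 -> {set C}) :
  simple_graph e ->
  (forall i, is_clique e (part_set part i)) ->
  (* (a) *)
  (forall i j : 'I_3, i != j -> forall v, v \in part_set part i ->
     #|[set w in part_set part j | e v w]| <= 1) ->
  (* (b) *)
  (forall (i j k : 'I_3) (a b c : T), i != j -> j != k -> i != k ->
     a \in part_set part i -> b \in part_set part j -> c \in part_set part k ->
     e a b -> e a c -> e b c) ->
  (* (c)(ii) *)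
  (forall i, #|part_set part i| <= #|Ls i|) ->
  (* (c)(iii) *)
  (exists d : 'I_3 -> C, (forall i, d i \in Ls i) /\ injective d) ->
  (* (c)(iv) *)
  (forall c : C, ~ (forall i, c \in Ls i)) ->
  exists f : T -> C, L_colouring e (fun v c => c \in Ls (part v)) f.
Proof.
move=> [es eirr] _ ha hb sz [d [dL dinj]] notr.
have hA : HA e part.
  move=> i j ij v pv; have := ha i j ij v; rewrite inE pv => /(_ isT).
  apply: leq_trans; apply: subset_leq_card; apply/subsetP => w.
  by rewrite !inE.
have hB : HB e part.
  move=> a b c pab pbc pac; apply: (hb (part a) (part b) (part c)) => //; by rewrite inE.
have szT : forall i, #|[set v in [set: T] | part v == i]| <= #|Ls i|.
  move=> i; apply: leq_trans (sz i); apply: subset_leq_card; apply/subsetP => w.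
  by rewrite !inE.
have [f [fL fp]] := @graph_ind T e part C (d ord0) es eirr hA hB #|T| [set: T] Ls d
  (max_card _) szT notr (fun i _ => dL i) (in2W dinj).
by exists f; split => [v|u v euv]; [apply: fL | apply/eqP; apply: fp].
Qed.
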